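(* Let $B$ be a finite set (of ''bath spins''), and introduce commuting indeterminates $b_{i,j}=b_{j,i}$ for distinct $i,j\in B$. For every subset $\mathcal S\subseteq B$ let $L_{\mathcal S}$ be a formal power series in the variables $\{b_{i,j}: i,j\in\mathcal S,\ i\neq j\}$ (with complex coefficients, which may depend on additional parameters such as a time $t$) whose constant term is nonzero. Define $\tilde L_{\mathcal S}$ recursively for all $\mathcal S\subseteq B$ by $$\tilde L_{\mathcal S}=L_{\mathcal S}\Big/\prod_{\mathcal C\subsetneq \mathcal S}\tilde L_{\mathcal C},$$ so that $L_{\mathcal S}=\prod_{\mathcal C\subseteq\mathcal S}\tilde L_{\mathcal C}$. Suppose the family $(L_{\mathcal S})$ is factorable under disconnected interactions, i.e. for every $\mathcal S\subseteq B$ and all subsets $\mathcal X,\mathcal Y\subseteq\mathcal S$ with $\mathcal X\cup\mathcal Y=\mathcal S$ and $\mathcal X\cap\mathcal Y=\emptyset$, setting $b_{i,j}=0$ for all $i\in\mathcal X$, $j\in\mathcal Y$ in $L_{\mathcal S}$ yields $L_{\mathcal X}L_{\mathcal Y}$. Then for every $\mathcal C\subseteq B$, every non-constant monomial appearing (with nonzero coefficient) in the power series $\tilde L_{\mathcal C}$ has the following property: the graph with vertex set $\mathcal C$ and with an edge $\{i,j\}$ for each variable $b_{i,j}$ occurring in that monomial is connected. Equivalently, no non-constant term of $\tilde L_{\mathcal C}$ can be factored into parts involving disjoint non-empty sets of spins of $\mathcal C$.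
   Context: The quotient and products are taken in the ring of formal power series; they are well defined because every $L_{\mathcal S}$, and hence every $\tilde L_{\mathcal S}$, has nonzero constant term and is thus invertible. Since $L_{\mathcal S}$ involves only variables indexed by pairs in $\mathcal S$, setting the cross variables to zero gives a series in variables indexed within $\mathcal X$ and within $\mathcal Y$, which is compared with the product $L_{\mathcal X}L_{\mathcal Y}$. *)

(* Defs.v *)
From HB Require Import structures.
From mathcomp Require Import all_boot all_order all_algebra.
Set Implicit Arguments. Unset Strict Implicit. Unset Printing Implicit Defensive.
Import Order.TTheory GRing.Theory Num.Theory.
Local Open Scope ring_scope.

(* unordered pairs {i,j}, i <> j, of elements of B: the indeterminates b_{i,j} *)
Definition edge (B : finType) := {e : {set B} | (#|e| == 2)%N}.

(* monomials = exponent vectors *)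
Definition mono (B : finType) := {ffun edge B -> nat}.
Definition mono0 (B : finType) : mono B := [ffun _ => 0%N].

(* formal power series = coefficient functions *)
Definition series (R : fieldType) (B : finType) := mono B -> R.

Definition ps_one (R : fieldType) (B : finType) : series R B :=
  fun m => (m == mono0 B)%:R.

(* Cauchy product: (f*g)_m = sum_{d1 + d2 = m} f_{d1} g_{d2} *)
Definition ps_mul (R : fieldType) (B : finType) (f g : series R B) : series R B :=
  fun m => \sum_(d : {dffun forall e : edge B, 'I_(m e).+1})
             f [ffun e => nat_of_ord (d e)] * g [ffun e => (m e - d e)%N].

Definition involves_only (R : fieldType) (B : finType) (S : {set B}) (f : series R B) :=
  forall m, f m != 0 -> forall e : edge B, (m e != 0)%N -> val e \subset S.

Definition cross (B : finType) (X Y : {set B}) (e : edge B) : bool :=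
  [exists i in X, exists j in Y, val e == [set i; j]].

(* substitute b_{i,j} = 0 for all i in X, j in Y *)
Definition kill_cross (R : fieldType) (B : finType) (X Y : {set B}) (f : series R B)
  : series R B :=
  fun m => if [exists e, (m e != 0)%N && cross X Y e] then 0 else f m.

Definition mono_graph (B : finType) (C : {set B}) (m : mono B) : rel B :=
  fun i j => [&& i \in C, j \in C &
              [exists e : edge B, (m e != 0)%N && (val e == [set i; j])]].

Definition mono_connected (B : finType) (C : {set B}) (m : mono B) : Prop :=
  forall i j, i \in C -> j \in C -> connect (mono_graph C m) i j.

(* Main.v *)
Require Import Defs.
From HB Require Import structures.
From mathcomp Require Import all_boot all_order all_algebra.
From Stdlib Require Import FunctionalExtensionality Lia.
From mathcomp Require Import zify.
Set Implicit Arguments. Unset Strict Implicit. Unset Printing Implicit Defensive.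
Import Order.TTheory GRing.Theory Num.Theory.
Local Open Scope ring_scope.

Section PS.
Variables (R : fieldType) (B : finType).
Local Notation mono := (mono B).
Local Notation series := (series R B).

Definition msub (a b : mono) : mono := [ffun e => (a e - b e)%N].
Definition mle (a b : mono) : bool := [forall e, (a e <= b e)%N].
Definition TT N := {ffun edge B -> 'I_N.+1}.
Definition emb N (x : TT N) : mono := [ffun e => nat_of_ord (x e)].
Definition toT N (v : mono) : TT N := [ffun e => inord (v e)].

Lemma embK N (v : mono) : (forall e, v e <= N)%N -> emb (toT N v) = v.
Proof. by move=> H; apply/ffunP=> e; rewrite !ffunE inordK // ltnS. Qed.

Lemma toTK N x : toT N (@emb N x) = x.
Proof. by apply/ffunP=> e; rewrite !ffunE inord_val. Qed.

Lemma emb_le N x e : (@emb N x e <= N)%N.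
Proof. by rewrite ffunE -ltnS. Qed.

Lemma psE N (f g : series) (m : mono) : (forall e, m e <= N)%N ->
  ps_mul f g m = \sum_(x : TT N | mle (emb x) m) f (emb x) * g (msub m (emb x)).
Proof.
move=> Hm.
pose J := {dffun forall e : edge B, 'I_(m e).+1}.
pose h (d : J) : TT N := [ffun e => inord (d e)].
pose h' (x : TT N) : J := finfun (fun e => (inord (x e) : 'I_(m e).+1)).
rewrite (reindex_onto h h'); last first.
  move=> x /forallP Hx; apply/ffunP=> e; rewrite /h /h' !ffunE.
  have := Hx e; rewrite ffunE => Hxe.
  by apply: val_inj; rewrite /= inordK ?ltnS // inordK ?ltnS ?(leq_trans Hxe).
rewrite /ps_mul; apply: eq_big.
  move=> d; have Hd : forall e, (d e <= m e)%N by move=> e; rewrite -ltnS.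
  apply/esym/andP; split.
    by apply/forallP=> e; rewrite /h !ffunE inordK // ltnS (leq_trans (Hd e)).
  apply/eqP/ffunP=> e; rewrite /h /h' !ffunE; apply: val_inj.
  by rewrite /= inordK ?ltnS // inordK // ltnS (leq_trans (Hd e)).
move=> d _.
have Hd : forall e, (d e <= m e)%N by move=> e; rewrite -ltnS.
have E : emb (h d) = [ffun e => nat_of_ord (d e)].
  by apply/ffunP=> e; rewrite /h !ffunE inordK // ltnS (leq_trans (Hd e)).
rewrite E; congr (_ * g _); apply/ffunP=> e; by rewrite !ffunE.
Qed.

Definition madd (a b : mono) : mono := [ffun e => (a e + b e)%N].
Definition mx (m : mono) : nat := \max_e m e.
Lemma mx_le (m : mono) e : (m e <= mx m)%N.
Proof. exact: (leq_bigmax e). Qed.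

Lemma mleP (a b : mono) : reflect (forall e, a e <= b e)%N (mle a b).
Proof. exact: forallP. Qed.

Lemma emb_toT N (v : mono) (m : mono) : (forall e, m e <= N)%N -> mle v m ->
  emb (toT N v) = v.
Proof. by move=> Hm /mleP Hv; apply: embK => e; apply: leq_trans (Hv e) (Hm e). Qed.

Lemma msub_le (m v : mono) : mle (msub m v) m.
Proof. by apply/mleP=> e; rewrite ffunE leq_subr. Qed.

Lemma msubK (m v : mono) : mle v m -> msub m (msub m v) = v.
Proof. by move/mleP=> H; apply/ffunP=> e; rewrite !ffunE subKn. Qed.

Lemma ps_mulC (f g : series) (m : mono) : ps_mul f g m = ps_mul g f m.
Proof.
move: (mx m) (@mx_le m) => N Hm; rewrite !(psE _ _ Hm).
pose h (x : TT N) := if mle (emb x) m then toT N (msub m (emb x)) else x.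
have hK : involutive h.
  move=> x; rewrite /h; case: (boolP (mle (emb x) m)) => Hx; last by rewrite (negbTE Hx).
  rewrite (emb_toT Hm (msub_le m _)) msub_le msubK //; exact: toTK.
rewrite (reindex_inj (can_inj hK)); apply: eq_big => x.
  rewrite /h; case: (boolP (mle (emb x) m)) => Hx; last by apply/negbTE.
  by rewrite (emb_toT Hm) ?msub_le.
move=> H; rewrite /h in H *; move: H; case: (boolP (mle (emb x) m)) => Hx H; last by rewrite H in Hx.
by rewrite (emb_toT Hm) ?msub_le // msubK // mulrC.
Qed.

Lemma mle0 (m : mono) : mle (@mono0 B) m.
Proof. by apply/mleP=> e; rewrite ffunE. Qed.

Lemma ps_mul1 (g : series) (m : mono) : ps_mul (@ps_one R B) g m = g m.
Proof.
move: (mx m) (@mx_le m) => N Hm; rewrite !(psE _ _ Hm).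
have E0 : emb (toT N (@mono0 B)) = mono0 B by apply: (emb_toT Hm (mle0 m)).
rewrite (bigD1 (toT N (@mono0 B))) /=; last by rewrite E0 mle0.
rewrite big1 ?addr0.
  rewrite E0 /ps_one eqxx mul1r; congr g; apply/ffunP=> e; by rewrite !ffunE subn0.
move=> x /andP [_ Hx]; rewrite /ps_one; case: eqP; last by rewrite mul0r.
by move=> E; move: Hx; rewrite -E toTK eqxx.
Qed.

Lemma ps_mulA (f g h : series) (m : mono) :
  ps_mul (ps_mul f g) h m = ps_mul f (ps_mul g h) m.
Proof.
move: (mx m) (@mx_le m) => N Hm; rewrite !(psE _ _ Hm).
have HmN : forall a : mono, mle a m -> forall e, (a e <= N)%N.
  by move=> a /mleP Ha e; apply: leq_trans (Ha e) (Hm e).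
under eq_bigr => a Ha do rewrite (psE _ _ (HmN _ Ha)) mulr_suml.
under [RHS]eq_bigr => b Hb do rewrite (psE _ _ (HmN _ (msub_le m _))) mulr_sumr.
rewrite (exchange_big_dep (fun b : TT N => mle (emb b) m)); last first.
  move=> a b /mleP Ha /mleP Hb; apply/mleP=> e; exact: leq_trans (Hb e) (Ha e).
apply: eq_bigr => b Hb.
rewrite [RHS](reindex_onto (fun a : TT N => toT N (msub (emb a) (emb b)))
                          (fun c : TT N => toT N (madd (emb b) (emb c)))); last first.
  move=> c Hc; have Hc' := Hc; move/mleP: Hc => Hc.
  rewrite (@embK N (madd (emb b) (emb c))); last first.
    move=> e; move/mleP: Hb => Hb; have := Hc e; rewrite !ffunE => H1.
    have := Hb e; rewrite ffunE => H2.
    apply: leq_trans (Hm e); rewrite -(subnKC H2) leq_add2l //.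
  rewrite -[RHS]toTK; congr toT; apply/ffunP=> e; by rewrite !ffunE addKn.
have Hsub : forall a : TT N, emb (toT N (msub (emb a) (emb b))) = msub (emb a) (emb b).
  move=> a; apply: embK => e; rewrite ffunE; apply: leq_trans (leq_subr _ _) _.
  exact: emb_le.
apply: eq_big => a.
  rewrite Hsub; move/mleP: Hb => Hb.
  case Hba: (mle (emb b) (emb a)).
    move/mleP: Hba => Hba.
    have -> : madd (emb b) (msub (emb a) (emb b)) = emb a.
      apply/ffunP=> e; move: (Hba e); rewrite !ffunE => H; by rewrite subnKC.
    rewrite toTK eqxx !andbT; apply/mleP/mleP => H e; have := H e; have := Hba e;
      have := Hb e; rewrite !ffunE; lia.
  rewrite andbF; apply/esym/negbTE/negP => /andP [_ /eqP E].
  move/negbT: Hba => /mleP; apply=> e.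
  rewrite -E (@embK N (madd _ _)); first by rewrite !ffunE leq_addr.
  move=> e'; have := emb_le a e'; have := emb_le b e'; rewrite !ffunE; lia.
move=> /andP [Ha Hba]; rewrite Hsub mulrA; congr (_ * _ * h _).
apply/ffunP => e; move/mleP: Hba => Hba; move/mleP: Ha => Ha.
have := Hba e; have := Ha e; rewrite !ffunE; lia.
Qed.

Lemma mle0E (v : mono) : mle v (@mono0 B) -> v = @mono0 B.
Proof. by move/mleP=> H; apply/ffunP=> e; have := H e; rewrite !ffunE leqn0 => /eqP. Qed.

Lemma psD N (f g : series) (m : mono) : (forall e, m e <= N)%N ->
  ps_mul f g m = f (@mono0 B) * g m +
    \sum_(x : TT N | mle (emb x) m && (emb x != @mono0 B)) f (emb x) * g (msub m (emb x)).
Proof.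
move=> Hm; rewrite (psE _ _ Hm).
have E0 : emb (toT N (@mono0 B)) = @mono0 B by apply: (emb_toT Hm (mle0 m)).
rewrite (bigD1 (toT N (@mono0 B))) /=; last by rewrite E0 mle0.
rewrite E0; congr (_ * g _ + _).
  by apply/ffunP=> e; rewrite !ffunE subn0.
apply: eq_bigl => x; congr (_ && _); apply/idP/idP; apply: contra => /eqP E; apply/eqP;
  first [by rewrite -E toTK | by rewrite E E0].
Qed.

Lemma ps_mul0 (f g : series) : ps_mul f g (@mono0 B) = f (@mono0 B) * g (@mono0 B).
Proof.
rewrite (@psD 0) ?big_pred0 ?addr0 //; last by move=> e; rewrite ffunE.
by move=> x; apply/negbTE; rewrite negb_and; case: (boolP (mle _ _)) => // /mle0E ->; rewrite eqxx.
Qed.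

Definition constant (f : series) := forall m, m != @mono0 B -> f m = 0.

Lemma ps_mul_const (f g : series) m : constant f -> ps_mul f g m = f (@mono0 B) * g m.
Proof.
move=> Hf; rewrite (@psD (mx m)); last exact: mx_le.
by rewrite big1 ?addr0 // => x /andP [_ Hx]; rewrite Hf ?mul0r.
Qed.

Definition deg (v : mono) := (\sum_e v e)%N.

Lemma deg_lt (m v : mono) : mle v m -> v != @mono0 B -> (deg (msub m v) < deg m)%N.
Proof.
move=> /mleP Hv Hv0.
have -> : deg m = (deg (msub m v) + deg v)%N.
  rewrite /deg -big_split /=; apply: eq_bigr => e _; rewrite ffunE subnK //.
rewrite -{1}[deg (msub m v)]addn0 ltn_add2l.
have [e He] : exists e, v e != 0%N.
  apply/existsP; apply: contraR Hv0 => /existsPn H; apply/eqP/ffunP=> e.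
  by have := H e; rewrite negbK ffunE => /eqP.
rewrite /deg (bigD1 e) //=; move: He; case: (v e) => //.
Qed.

Lemma ps_cancel (f g h : series) : f (@mono0 B) != 0 ->
  ps_mul f g = ps_mul f h -> g = h.
Proof.
move=> Hf E; apply: functional_extensionality.
suff H : forall n m, (deg m < n)%N -> g m = h m by move=> m; exact: (H _ m (ltnSn _)).
elim=> // n IH m Hm.
have := f_equal (fun F => F m) E; rewrite /= !(@psD (mx m)); try exact: mx_le.
rewrite (eq_bigr (fun x => f (emb x) * h (msub m (emb x)))); last first.
  move=> x /andP [H1 H2]; rewrite IH //; apply: leq_trans (deg_lt H1 H2) _; by rewrite -ltnS.
by move/addIr/(mulfI Hf).
Qed.

Lemma ps_mulCf (f g : series) : ps_mul f g = ps_mul g f.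
Proof. apply: functional_extensionality => m; exact: ps_mulC. Qed.
Lemma ps_mulAf (f g h : series) : ps_mul f (ps_mul g h) = ps_mul (ps_mul f g) h.
Proof. apply: functional_extensionality => m; symmetry; exact: ps_mulA. Qed.
Lemma ps_mul1f (g : series) : ps_mul (@ps_one R B) g = g.
Proof. apply: functional_extensionality => m; exact: ps_mul1. Qed.

Definition kz (P : pred (edge B)) (f : series) : series :=
  fun m => if [exists e, (m e != 0)%N && P e] then 0 else f m.

Lemma kzM P (f g : series) : kz P (ps_mul f g) = ps_mul (kz P f) (kz P g).
Proof.
apply: functional_extensionality => m; rewrite (psE _ _ (@mx_le m)) /kz.
case: ifP => H.
  apply/esym/big1 => x /mleP Hx.
  case/existsP: H => e /andP [He Pe].
  case: (boolP (emb x e != 0%N)) => Hxe.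
    by rewrite ifT ?mul0r //; apply/existsP; exists e; rewrite Hxe.
  rewrite [X in _ * X]ifT ?mulr0 //; apply/existsP; exists e; rewrite Pe andbT ffunE.
  by move: Hxe; rewrite negbK => /eqP ->; rewrite subn0.
rewrite (psE _ _ (@mx_le m)); apply: eq_bigr => x /mleP Hx.
rewrite !ifF //; apply/negbTE/existsPn => e; apply/negP => /andP [He Pe];
  move/negbT: H => /existsPn /(_ e); rewrite Pe andbT negbK => /eqP Hme.
all: first [by move: He; rewrite ?ffunE Hme ?sub0n eqxx | by have := Hx e; rewrite Hme leqn0 => /eqP E; move: He; rewrite E].
Qed.

Lemma kz1 P : kz P (@ps_one R B) = @ps_one R B.
Proof.
apply: functional_extensionality => m; rewrite /kz; case: ifP => // /existsP [e /andP [He _]].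
rewrite /ps_one; case: eqP => // E; by move: He; rewrite E ffunE eqxx.
Qed.

Lemma kz_id P (f : series) (m : mono) : ~~ [exists e, (m e != 0)%N && P e] -> kz P f m = f m.
Proof. by rewrite /kz => /negbTE ->. Qed.


Definition nsub (S : {set B}) := fun e : edge B => ~~ (val e \subset S).

Lemma kz_triv (P : pred (edge B)) (S : {set B}) (f : series) :
  involves_only S f -> (forall e : edge B, val e \subset S -> ~~ P e) -> kz P f = f.
Proof.
move=> Hinv HP; apply: functional_extensionality => m; rewrite /kz.
case: ifP => // /existsP [e /andP [He Pe]].
apply/esym/eqP; apply: contraT => Hf.
by have := HP e (Hinv m Hf e He); rewrite Pe.
Qed.

Lemma kz_inv (S : {set B}) (f : series) : kz (nsub S) f = f -> involves_only S f.
Proof.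
move=> E m Hf e He; move: Hf; rewrite -E /kz; case: ifP; first by rewrite eqxx.
move/negbT/existsPn/(_ e); rewrite He /nsub /= negbK; done.
Qed.

Lemma mono_ne0 (m : mono) : m != @mono0 B -> exists e, m e != 0%N.
Proof.
move=> Hm; apply/existsP; apply: contraR Hm => /existsPn H; apply/eqP/ffunP=> e.
by have := H e; rewrite negbK ffunE => /eqP.
Qed.

Lemma cross_sub (X Y X' Y' : {set B}) (e : edge B) :
  X' \subset X -> Y' \subset Y -> cross X' Y' e -> cross X Y e.
Proof.
move=> /subsetP HX /subsetP HY /existsP [i /andP [Hi /existsP [j /andP [Hj E]]]].
by apply/existsP; exists i; rewrite HX //=; apply/existsP; exists j; rewrite HY.
Qed.

End PS.

HB.instance Definition _ (R : fieldType) (B : finType) :=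
  Monoid.isComLaw.Build (series R B) (@ps_one R B) (@ps_mul R B)
    (@ps_mulAf R B) (@ps_mulCf R B) (@ps_mul1f R B).

Unset Implicit Arguments.

Theorem lemma1 (R : fieldType) (B : finType)
  (L Lt : {set B} -> series R B)
  (HLvars : forall S, involves_only S (L S))
  (HLconst : forall S, L S (mono0 B) != 0)
  (Hfact : forall S X Y : {set B}, X :|: Y = S -> X :&: Y = set0 ->
     forall m, kill_cross X Y (L S) m = ps_mul (L X) (L Y) m)
  (HLt : forall S m,
     L S m = (\big[@ps_mul R B/@ps_one R B]_(C : {set B} | C \subset S) Lt C) m) :
  forall (C : {set B}) (m : mono B), m != mono0 B -> Lt C m != 0 ->
    (forall e : edge B, (m e != 0)%N -> val e \subset C) /\ mono_connected C m.
Proof.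
have HLt' : forall S, L S = \big[@ps_mul R B/@ps_one R B]_(C : {set B} | C \subset S) Lt C.
  by move=> S; apply: functional_extensionality => m; apply: HLt.
have ev0 : forall (P : pred {set B}) (F : {set B} -> series R B),
    (\big[@ps_mul R B/@ps_one R B]_(D | P D) F D) (mono0 B) = \prod_(D | P D) F D (mono0 B).
  move=> P F; apply: (big_morph (fun f : series R B => f (mono0 B))).
    by move=> f g; rewrite ps_mul0.
  by rewrite /ps_one eqxx.
have kzm : forall (Pe : pred (edge B)) (P : pred {set B}) (F : {set B} -> series R B),
    kz Pe (\big[@ps_mul R B/@ps_one R B]_(D | P D) F D) =
    \big[@ps_mul R B/@ps_one R B]_(D | P D) kz Pe (F D).
  move=> Pe P F; apply: (big_morph (kz Pe)); [exact: kzM | exact: kz1].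
have Lt0 : forall D, Lt D (mono0 B) != 0.
  move=> D; have := HLconst D; rewrite HLt' ev0; apply: contra => /eqP H.
  by rewrite (bigD1 D) //= H mul0r.
have prod0 : forall (P : pred {set B}) (F : {set B} -> series R B),
    (forall D, P D -> F D (mono0 B) != 0) ->
    (\big[@ps_mul R B/@ps_one R B]_(D | P D) F D) (mono0 B) != 0.
  move=> P F HF; rewrite ev0; apply: (big_ind (fun x : R => x != 0)) => //.
  - exact: oner_neq0.
  - by move=> x y; apply: mulf_neq0.
have Inv : forall D, involves_only D (Lt D).
  suff H : forall n (D : {set B}), (#|D| < n)%N -> involves_only D (Lt D).
    by move=> D; apply: (H _ D (ltnSn _)).
  elim=> // n IH D HD; apply: kz_inv.
  pose Q := \big[@ps_mul R B/@ps_one R B]_(C : {set B} | (C \subset D) && (C != D)) Lt C.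
  have EL : L D = ps_mul (Lt D) Q by rewrite HLt' (bigD1 D).
  have EK : L D = ps_mul (kz (nsub D) (Lt D)) Q.
    rewrite -{1}(@kz_triv _ _ (nsub D) D (L D) (HLvars D)); last by move=> e; rewrite /nsub negbK.
    rewrite HLt' kzm (bigD1 D) //=; congr ps_mul; apply: eq_bigr => C /andP [HC HCD].
    apply: (kz_triv (S := C)); last by move=> e He; rewrite /nsub negbK (subset_trans He HC).
    apply: IH; have H : (#|C| < #|D|)%N by apply: proper_card; rewrite properEneq HCD HC.
    by apply: leq_trans H _; rewrite -ltnS.
  apply: (@ps_cancel _ _ Q); first by apply: prod0 => C _; apply: Lt0.
  by rewrite ps_mulCf -EK EL ps_mulCf.
have LtE : forall m, m != mono0 B -> Lt set0 m = 0.
  move=> m Hm; apply/eqP; apply: contraT => Hne.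
  have [e He] := mono_ne0 Hm.
  have := Inv set0 m Hne e He; rewrite subset0 => /eqP E.
  by have := valP e; rewrite E cards0.
have Main : forall n (C : {set B}), (#|C| < n)%N -> forall X Y : {set B},
    X :|: Y = C -> X :&: Y = set0 -> X != set0 -> Y != set0 ->
    constant (kz (cross X Y) (Lt C)).
  elim=> // n IH C HC X Y HU HI HX0 HY0.
  have XC : X \subset C by rewrite -HU subsetUl.
  have YC : Y \subset C by rewrite -HU subsetUr.
  have noXY : forall k, k \in X -> k \in Y -> False.
    move=> k kX kY; have : k \in X :&: Y by rewrite inE kX kY.
    by rewrite HI inE.
  have triv : forall D : {set B}, (D \subset X) || (D \subset Y) ->
      kz (cross X Y) (Lt D) = Lt D.
    move=> D HD; apply: (kz_triv (S := D) (Inv D)) => e He.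
    apply/negP => /existsP [i /andP [Hi /existsP [j /andP [Hj /eqP E]]]].
    have iD : i \in D by apply: (subsetP He); rewrite E !inE eqxx.
    have jD : j \in D by apply: (subsetP He); rewrite E !inE eqxx orbT.
    case/orP: HD => /subsetP HD.
      by apply: (noXY j) => //; apply: HD.
    by apply: (noXY i) => //; apply: HD.
  have mixed : forall D : {set B}, D \subset C -> ~~ (D \subset X) -> ~~ (D \subset Y) ->
      D != C -> constant (kz (cross X Y) (Lt D)).
    move=> D DC DX DY DnC m Hm.
    have HDC : (#|D| < #|C|)%N by apply: proper_card; rewrite properEneq DnC DC.
    have H := IH D (leq_trans HDC (HC : #|C| <= n)%N) (X :&: D) (Y :&: D).
    have H4 : Y :&: D != set0.
      apply/set0Pn; case/subsetPn: DX => k kD kX; exists k; rewrite inE kD andbT.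
      by move/subsetP: DC => /(_ k kD); rewrite -HU inE (negbTE kX).
    have H3 : X :&: D != set0.
      apply/set0Pn; case/subsetPn: DY => k kD kY; exists k; rewrite inE kD andbT.
      by move/subsetP: DC => /(_ k kD); rewrite -HU inE (negbTE kY) orbF.
    have H2 : (X :&: D) :&: (Y :&: D) = set0 by rewrite setIACA HI set0I.
    have H1 : (X :&: D) :|: (Y :&: D) = D by rewrite -setIUl HU; apply/setIidPr.
    have := H H1 H2 H3 H4 m Hm.
    move=> Hk; rewrite /kz; case: ifP => // Hc; rewrite -Hk kz_id //.
    apply/negP => /existsP [e /andP [He Ce]]; move/negbT: Hc => /negP; apply.
    apply/existsP; exists e; rewrite He /=.
    by apply: cross_sub Ce; apply: subsetIl.
  have E1 : kz (cross X Y) (L C) = ps_mul (L X) (L Y).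
    by apply: functional_extensionality => m; exact: (Hfact C X Y HU HI m).
  rewrite (HLt' C) kzm (bigID (fun D : {set B} => D \subset X)) /= in E1.
  pose PY := \big[@ps_mul R B/@ps_one R B]_(D : {set B} | (D \subset Y) && (D != set0)) Lt D.
  pose K := kz (cross X Y) (Lt C).
  pose M := \big[@ps_mul R B/@ps_one R B]_(D : {set B} |
     (((D \subset C) && ~~ (D \subset X)) && ~~ (D \subset Y)) && (D != C)) kz (cross X Y) (Lt D).
  have EX : \big[@ps_mul R B/@ps_one R B]_(D : {set B} | (D \subset C) && (D \subset X))
      kz (cross X Y) (Lt D) = L X.
    rewrite HLt'; apply: eq_big => D; first by apply: andb_idl => H; apply: subset_trans H XC.
    by move=> /andP [_ H]; apply: triv; rewrite H.
  have CX : ~~ (C \subset X).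
    case/set0Pn: HY0 => y yY; apply/negP => /subsetP CX.
    by apply: (noXY y) => //; apply: CX; apply: (subsetP YC).
  have CY : ~~ (C \subset Y).
    case/set0Pn: HX0 => x xX; apply/negP => /subsetP CY.
    by apply: (noXY x) => //; apply: CY; apply: (subsetP XC).
  have ER : \big[@ps_mul R B/@ps_one R B]_(D : {set B} | (D \subset C) && ~~ (D \subset X))
      kz (cross X Y) (Lt D) = ps_mul PY (ps_mul K M).
    rewrite (bigID (fun D : {set B} => D \subset Y)) /=; congr ps_mul.
      apply: eq_big => D.
        case DY: (D \subset Y); rewrite ?andbF // andbT (subset_trans DY YC) /=.
        have -> : (D \subset X) = (D == set0); last by [].
        apply/idP/idP => [DX | /eqP ->]; last exact: sub0set.
        by rewrite -subset0 -HI subsetI DX DY.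
      by move=> /andP [_ H]; apply: triv; rewrite H orbT.
    by rewrite (bigD1 C) //= subxx CX CY.
  have LY : L Y = ps_mul (Lt set0) PY by rewrite HLt' (bigD1 set0) ?sub0set.
  rewrite EX ER LY in E1.
  have E2 : ps_mul (ps_mul (L X) PY) (ps_mul K M) = ps_mul (ps_mul (L X) PY) (Lt set0).
    by rewrite -!ps_mulAf (ps_mulCf PY (Lt set0)).
  have Q0 : ps_mul (L X) PY (mono0 B) != 0.
    by rewrite ps_mul0 mulf_neq0 // prod0 // => D _; apply: Lt0.
  have E3 := ps_cancel Q0 E2.
  have Mc : constant M.
    apply: (big_ind (fun f => constant f)).
    - by move=> m Hm; rewrite /ps_one (negbTE Hm).
    - by move=> f g Hf Hg m Hm; rewrite ps_mul_const // Hg // mulr0.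
    - by move=> D /andP [/andP [/andP [DC DX] DY] DnC]; apply: mixed.
  have M0 : M (mono0 B) != 0.
    apply: prod0 => D _; rewrite kz_id ?Lt0 //.
    by apply/existsPn => e; rewrite ffunE eqxx.
  move=> m Hm; have := f_equal (fun F => F m) E3.
  rewrite /= ps_mulCf ps_mul_const // LtE // => /eqP; rewrite mulf_eq0 (negbTE M0) /=.
  by move/eqP.
move=> C m Hm HLtm; split; first by move=> e He; apply: (Inv C m HLtm).
move=> i j Hi Hj; case: (boolP (connect (mono_graph C m) i j)) => // Hnc; exfalso.
pose X := [set k in C | connect (mono_graph C m) i k].
pose Y := C :\: X.
have HU : X :|: Y = C.
  apply/setP => k; rewrite !inE; by case: (k \in C); case: (connect _ i k).
have HI : X :&: Y = set0.
  apply/setP => k; rewrite !inE; by case: (k \in C); case: (connect _ i k).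
have HX0 : X != set0 by apply/set0Pn; exists i; rewrite inE Hi connect0.
have HY0 : Y != set0 by apply/set0Pn; exists j; rewrite !inE Hj (negbTE Hnc).
have := Main _ C (ltnSn _) X Y HU HI HX0 HY0 m Hm.
rewrite /kz; case: ifP => Hc; last by move=> E; move: HLtm; rewrite E eqxx.
move=> _; case/existsP: Hc => e /andP [He /existsP [a /andP [Ha /existsP [b /andP [Hb E]]]]].
move: Ha Hb; rewrite !inE => /andP [aC ia] /andP [/negP bX bC]; apply: bX.
rewrite bC /=; apply: connect_trans ia (connect1 _).
by rewrite /mono_graph aC bC /=; apply/existsP; exists e; rewrite He.
Qed.
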